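(* For deterministic algorithms, none of the following problems can be solved in time less than $\Omega(|G|)$: (1) given two Abelian groups $G$ and $H$, decide whether $G$ is isomorphic to $H$; (2) given an Abelian group $G$, find a basis for $G$; (3) given an Abelian group $G$, find generators for $G$ with relations of size at most $n^{o(1)}$, where $n=|G|$.
   Context: The algorithm accesses elements of the groups and queries their Cayley tables (products of pairs of elements), each access costing one unit of time. A basis of a finite Abelian group $G$ is a tuple $a_1,\ldots,a_t$ such that $G$ is the internal direct product of the nontrivial cyclic subgroups $\langle a_1\rangle,\ldots,\langle a_t\rangle$. Relations for generators are equations between products of powers of the generators that together determine the group; their size is their total description length. *)

(* Defs.v *)
From mathcomp Require Import all_boot all_order all_algebra.
Set Implicit Arguments. Unset Strict Implicit. Unset Printing Implicit Defensive.
Import GRing.Theory Num.Theory.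

Definition table (n : nat) := 'I_n.+1 -> 'I_n.+1 -> 'I_n.+1.

Definition ab_table n (mul : table n) : Prop :=
  (forall x y z, mul x (mul y z) = mul (mul x y) z) /\
  (forall x y, mul x y = mul y x) /\
  exists e, (forall x, mul e x = x) /\ (forall x, exists y, mul x y = e).

Definition table_iso n m (G : table n) (H : table m) : Prop :=
  exists f : 'I_n.+1 -> 'I_m.+1,
    bijective f /\ forall x y, f (G x y) = H (f x) (f y).

Definition gid n (mul : table n) : 'I_n.+1 :=
  odflt ord0 [pick e | [forall x, mul e x == x]].

Fixpoint pw n (mul : table n) (x : 'I_n.+1) (k : nat) : 'I_n.+1 :=
  if k is k'.+1 then mul x (pw mul x k') else gid mul.

Definition gord n (mul : table n) (x : 'I_n.+1) : nat :=
  (find (fun k => pw mul x k.+1 == gid mul) (iota 0 n.+1)).+1.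

Definition zpow n (mul : table n) (x : 'I_n.+1) (z : int) : 'I_n.+1 :=
  pw mul x (absz (z %% (gord mul x)%:Z)%Z).

Definition prodpw n (mul : table n) (s : seq 'I_n.+1) (es : seq nat) : 'I_n.+1 :=
  foldr (fun p acc => mul (pw mul p.1 p.2) acc) (gid mul) (zip s es).

Definition zprod n (mul : table n) (s : seq 'I_n.+1) (v : seq int) : 'I_n.+1 :=
  foldr (fun p acc => mul (zpow mul p.1 p.2) acc) (gid mul) (zip s v).

Definition is_basis n (mul : table n) (s : seq 'I_n.+1) : Prop :=
  all (fun a => 1 < gord mul a) s /\
  forall x, exists! es : seq nat,
    [/\ size es = size s, all2 (fun e a => e < gord mul a) es s & prodpw mul s es = x].

(* Relations: an equation u = v between words; a word is a product of powers
   g_i^e of generators, written as a list of pairs (i, e). *)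
Definition word := seq (nat * int).
Definition relation := (word * word)%type.

Definition wvec (t : nat) (w : word) : seq int :=
  [seq (\sum_(p <- w | p.1 == j) p.2)%R | j <- iota 0 t].

Definition relvec (t : nat) (r : relation) : seq int :=
  [seq (ab.1 - ab.2)%R | ab <- zip (wvec t r.1) (wvec t r.2)].

Definition lincomb (t : nat) (cs : seq int) (vs : seq (seq int)) : seq int :=
  [seq (\sum_(k < size vs) cs`_k * nth 0 (nth [::] vs k) j)%R | j <- iota 0 t].

(* gens with rels is a presentation of G (as an Abelian group): the gens
   generate G, and an integer relation among the gens holds in G iff it is
   a consequence of rels, i.e. G = Z^t / <rels> via the gens. *)
Definition presents n (mul : table n) (gens : seq 'I_n.+1) (rels : seq relation) : Prop :=
  let t := size gens in
  all (fun r => all (fun p => p.1 < t) (r.1 ++ r.2)) rels /\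
  (forall x, exists v : seq int, size v = t /\ zprod mul gens v = x) /\
  (forall v : seq int, size v = t ->
     (zprod mul gens v = gid mul <->
      exists cs : seq int, size cs = size rels /\ v = lincomb t cs (map (relvec t) rels))).

(* description length of relations (binary encoding of indices/exponents) *)
Definition bitlen (k : nat) : nat := (trunc_log 2 k).+1.
Definition rsize (rels : seq relation) : nat :=
  \sum_(r <- rels) \sum_(p <- r.1 ++ r.2) (1 + bitlen p.1 + bitlen (absz p.2)).

(* Deterministic query algorithms = adaptive decision trees. *)
Inductive dtree (Q A O : Type) : Type :=
| Leaf of O
| Node of Q & (A -> dtree Q A O).
Arguments Leaf {Q A O}.
Arguments Node {Q A O}.

Fixpoint run (Q A O : Type) (orc : Q -> A) (t : dtree Q A O) : O * nat :=
  match t with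
  | Leaf o => (o, 0)
  | Node q k => let r := run orc (k (orc q)) in (r.1, r.2.+1)
  end.

Definition q1 (n : nat) := ('I_n.+1 * 'I_n.+1)%type.
Definition orc1 n (G : table n) (q : q1 n) : 'I_n.+1 := G q.1 q.2.
Definition q2 (n m : nat) := (q1 n + q1 m)%type.
Definition orc2 n m (G : table n) (H : table m) (q : q2 n m) : nat :=
  match q with inl q => val (G q.1 q.2) | inr q => val (H q.1 q.2) end.

(* f(n) = n^{o(1)}: for every k > 0, eventually f(n)^k <= n *)
Definition subpoly (f : nat -> nat) : Prop :=
  forall k, 0 < k -> exists N, forall n, N <= n -> f n ^ k <= n.

(* Main.v *)
From HB Require Import structures.
Require Import Defs.
From mathcomp Require Import all_boot all_order all_algebra.
From mathcomp Require Import zify.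
Set Implicit Arguments. Unset Strict Implicit. Unset Printing Implicit Defensive.
Import GRing.Theory.

Lemma run_ext (Q A O : Type) (o1 o2 : Q -> A) (t : dtree Q A O) :
  (forall q, o1 q = o2 q) -> run o1 t = run o2 t.
Proof.
move=> E; elim: t => [o|q k IH] //=.
by rewrite E IH.
Qed.

Section Transport.
Local Open Scope ring_scope.
Variable n : nat.
Variable Gr : zmodType.
Variables (pi : 'I_n.+1 -> Gr) (pii : Gr -> 'I_n.+1).
Hypotheses (pK : cancel pi pii) (piK : cancel pii pi).

Definition tr : table n := fun x y => pii (pi x + pi y).

Lemma tr_ab : ab_table tr.
Proof.
rewrite /tr; split; first by move=> x y z; rewrite !piK addrA.
split; first by move=> x y; rewrite addrC.
exists (pii 0); split; first by move=> x; rewrite piK add0r pK.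
by move=> x; exists (pii (- pi x)); rewrite piK subrr.
Qed.

Lemma tr_gid : gid tr = pii 0.
Proof.
rewrite /gid; case: pickP => [e /forallP He | H0] /=.
  have := eqP (He (pii 0)); rewrite /tr piK addr0 pK => ->; by [].
exfalso; have := H0 (pii 0); move/negP; apply; apply/forallP => x.
by rewrite /tr piK add0r pK.
Qed.

Lemma tr_pw x k : pw tr x k = pii (pi x *+ k).
Proof.
elim: k => [|k IH] /=; first by rewrite tr_gid mulr0n.
by rewrite IH /tr piK mulrS.
Qed.

Lemma tr_pi_pw x k : pi (pw tr x k) = pi x *+ k.
Proof. by rewrite tr_pw piK. Qed.

Lemma tr_pi_mul x y : pi (tr x y) = pi x + pi y.
Proof. by rewrite /tr piK. Qed.

Lemma tr_gid_gid : tr (gid tr) (gid tr) = gid tr.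
Proof. by rewrite tr_gid /tr piK addr0. Qed.

Variable P : Gr -> bool.
Hypotheses (P0 : P 0) (PD : forall a b, P a -> P b -> P (a + b)).

Lemma PMn a k : P a -> P (a *+ k).
Proof. by move=> Pa; elim: k => [|k IH]; rewrite ?mulr0n ?mulrS ?PD. Qed.

Lemma prodpw_P s es : all (fun a => P (pi a)) s -> P (pi (prodpw tr s es)).
Proof.
rewrite /prodpw; elim: s es => [|a s IH] [|e es] /=; try by rewrite tr_gid piK.
move=> /andP[Pa Ps]; rewrite tr_pi_mul PD //; first by rewrite tr_pi_pw PMn.
exact: IH.
Qed.

Lemma zprod_P s es : all (fun a => P (pi a)) s -> P (pi (zprod tr s es)).
Proof.
rewrite /zprod; elim: s es => [|a s IH] [|e es] /=; try by rewrite tr_gid piK.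
move=> /andP[Pa Ps]; rewrite tr_pi_mul PD //; first by rewrite /zpow tr_pi_pw PMn.
exact: IH.
Qed.
End Transport.

Lemma fresh_of (T : finType) (l : seq T) : (size l < #|T|)%N -> exists x, x \notin l.
Proof.
move=> lt; case: (pickP (fun x => x \notin l)) => [x Hx|H]; first by exists x.
have : (#|T| <= #|mem l|)%N.
  by apply: subset_leq_card; apply/subsetP => z _; have := H z; move/negbT; rewrite negbK.
move=> c; have := leq_trans c (card_size l); by rewrite leqNgt lt.
Qed.

Lemma complete (X Y : finType) (y0 : Y) (s : seq (X * Y)) :
  uniq (map fst s) -> uniq (map snd s) -> #|X| = #|Y| ->
  exists g : X -> Y, bijective g /\ forall x y, (x, y) \in s -> g x = y.
Proof.
move=> u1 u2 cXY.
move Hm: (#|X| - size s)%N => m.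
elim: m s u1 u2 Hm => [|m IH] s u1 u2 Hm.
- have allX : forall x, x \in map fst s.
    move=> x; apply/negPn/negP => xn.
    have : uniq (x :: map fst s) by rewrite /= xn u1.
    move/card_uniqP => /= c.
    have := max_card (mem (x :: map fst s)); rewrite c size_map; lia.
  exists (fun x => nth y0 (map snd s) (index x (map fst s))); split.
    apply: inj_card_bij; last by rewrite cXY.
    have hi : forall x, (index x (map fst s) < size (map snd s))%N.
      by move=> x; rewrite size_map -(size_map fst) index_mem allX.
    move=> x1 x2 /eqP; rewrite nth_uniq ?hi //.
    move/eqP => E.
    by rewrite -(nth_index x1 (allX x1)) -(nth_index x1 (allX x2)) E.
  move=> x y xy.
  have i_lt : (index (x, y) s < size s)%N by rewrite index_mem.
  have ex : nth x (map fst s) (index (x, y) s) = x.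
    by rewrite (nth_map (x,y)) // nth_index.
  have ey : nth y0 (map snd s) (index (x, y) s) = y.
    by rewrite (nth_map (x,y)) // nth_index.
  by rewrite -{1}ex index_uniq ?size_map.
- have lt : (size s < #|X|)%N by lia.
  have [x xn] : exists x, x \notin map fst s by apply: fresh_of; rewrite size_map.
  have [y yn] : exists y, y \notin map snd s by apply: fresh_of; rewrite size_map; lia.
  have u1' : uniq (map fst ((x, y) :: s)) by rewrite /= xn u1.
  have u2' : uniq (map snd ((x, y) :: s)) by rewrite /= yn u2.
  have Hm' : (#|X| - size ((x, y) :: s))%N = m by rewrite /= subnS Hm.
  have [g [bg Hg]] := IH ((x, y) :: s) u1' u2' Hm'.
  exists g; split => // a b ab; apply: Hg; by rewrite in_cons ab orbT.
Qed.
From mathcomp Require Import all_boot all_order all_algebra.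
From mathcomp Require Import zify.
Set Implicit Arguments. Unset Strict Implicit. Unset Printing Implicit Defensive.
Import GRing.Theory.

Section Adv.
Local Open Scope ring_scope.
Variables (L : finType) (H : finZmodType).
Hypothesis HL : (#|H| <= #|L|)%N.

Definition st := seq (L * H).
Definition Inv (s : st) := uniq (map fst s) && uniq (map snd s).
Definition lk (s : st) (x : L) : H := nth 0 (map snd s) (index x (map fst s)).
Definition freshH (s : st) : H := odflt 0 [pick h | h \notin map snd s].
Definition freshL (s : st) (d : L) : L := odflt d [pick l | l \notin map fst s].
Definition ens (s : st) x : st := if x \in map fst s then s else (x, freshH s) :: s.
Definition lbl (s : st) (d : L) (z : H) : L := nth d (map fst s) (index z (map snd s)).
Definition step (s : st) (x y : L) : st * L :=
  let s2 := ens (ens s x) y in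
  let z := lk s2 x + lk s2 y in
  if z \in map snd s2 then (s2, lbl s2 x z)
  else let l := freshL s2 x in ((l, z) :: s2, l).

Lemma lk_in s x : x \in map fst s -> (x, lk s x) \in s.
Proof.
move=> xs; have i_lt : (index x (map fst s) < size s)%N by rewrite -(size_map fst) index_mem.
have -> : (x, lk s x) = nth (x, 0) s (index x (map fst s)).
  by rewrite [RHS]surjective_pairing -(nth_map _ x fst) // -(nth_map _ 0 snd) // nth_index.
exact: mem_nth.
Qed.

Lemma lbl_in s d z : z \in map snd s -> (lbl s d z, z) \in s.
Proof.
move=> zs; have i_lt : (index z (map snd s) < size s)%N by rewrite -(size_map snd) index_mem.
have -> : (lbl s d z, z) = nth (d, z) s (index z (map snd s)).
  by rewrite [RHS]surjective_pairing -(nth_map _ d fst) // -(nth_map _ z snd) // nth_index.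
exact: mem_nth.
Qed.

Lemma freshH_ok s : (size s < #|H|)%N -> freshH s \notin map snd s.
Proof.
move=> lt; rewrite /freshH; case: pickP => [h -> //|H0] /=.
have [h hn] : exists h, h \notin map snd s by apply: fresh_of; rewrite size_map.
by have := H0 h; rewrite hn.
Qed.

Lemma freshL_ok s d : (size s < #|L|)%N -> freshL s d \notin map fst s.
Proof.
move=> lt; rewrite /freshL; case: pickP => [h -> //|H0] /=.
have [h hn] : exists h, h \notin map fst s by apply: fresh_of; rewrite size_map.
by have := H0 h; rewrite hn.
Qed.

Lemma ens_spec s x : Inv s -> (size s < #|H|)%N ->
  [/\ Inv (ens s x), {subset s <= ens s x}, (size (ens s x) <= (size s).+1)%N
    & x \in map fst (ens s x)].
Proof.
move=> /andP[u1 u2] lt; rewrite /ens; case: ifP => xs.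
  by split => //; rewrite /Inv u1 u2.
split => //=; last by rewrite in_cons eqxx.
  by rewrite /Inv /= xs u1 freshH_ok.
by move=> p ps; rewrite in_cons ps orbT.
Qed.

Lemma step_spec s x y : Inv s -> (size s + 3 <= #|H|)%N ->
  let r := step s x y in
  [/\ Inv r.1, {subset s <= r.1}, (size r.1 <= size s + 3)%N &
    exists hx hy, [/\ (x, hx) \in r.1, (y, hy) \in r.1 & (r.2, hx + hy) \in r.1]].
Proof.
move=> I lt.
have [I1 S1 z1 x1] := ens_spec x I (ltac:(lia)).
have [I2 S2 z2 y2] := ens_spec y I1 (ltac:(lia)).
have z3 : (size (ens (ens s x) y) <= size s + 2)%N by lia.
move: I2 S2 z3 y2; set s2 := ens (ens s x) y; move=> I2 S2 z3 y2.
have x2 : x \in map fst s2.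
  have [p /S2 ps ->] := mapP x1; exact: map_f.
rewrite /step -/s2; case: ifP => zin /=.
  split => //; first by move=> p /S1 /S2.
    lia.
  exists (lk s2 x), (lk s2 y); split; [exact: lk_in x2|exact: lk_in y2|exact: lbl_in zin].
move: I2 => /andP[u1 u2].
split.
- rewrite /Inv /= zin u2 freshL_ok ?u1 //; lia.
- by move=> p /S1 /S2 ps; rewrite in_cons ps orbT.
- lia.
- exists (lk s2 x), (lk s2 y); split; try by rewrite in_cons ?lk_in ?orbT.
  by rewrite in_cons eqxx.
Qed.

Variables (Q A O : Type) (decode : Q -> option (L * L)) (fixa : Q -> A) (wrap : L -> A).

Fixpoint adv (k : nat) (s : st) (t : dtree Q A O) : st * option O :=
  match t with
  | Leaf o => (s, Some o)
  | Node q f =>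
    match k with
    | 0 => (s, None)
    | k'.+1 =>
      match decode q with
      | None => adv k' s (f (fixa q))
      | Some xy => adv k' (step s xy.1 xy.2).1 (f (wrap (step s xy.1 xy.2).2))
      end
    end
  end.

Definition consistent (T : L -> L -> L) (s : st) :=
  forall x y hx hy l, (x, hx) \in s -> (y, hy) \in s -> (l, hx + hy) \in s -> T x y = l.

Definition gorc (T : L -> L -> L) (q : Q) : A :=
  match decode q with Some xy => wrap (T xy.1 xy.2) | None => fixa q end.

Lemma adv_spec k s t : Inv s -> (size s + 3 * k <= #|H|)%N ->
  let r := adv k s t in
  [/\ Inv r.1, {subset s <= r.1}, (size r.1 <= size s + 3 * k)%N &
    forall T, consistent T r.1 ->
      match r.2 with
      | Some o => (run (gorc T) t).1 = o
      | None => (k <= (run (gorc T) t).2)%N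
      end].
Proof.
elim: k s t => [|k IH] s t I lt.
  case: t => [o|q f] /=; split => //; lia.
case: t => [o|q f] /=.
  split => //; lia.
case E: (decode q) => [xy|].
- have [I1 S1 z1 [hx [hy [x1 y1 l1]]]] := step_spec xy.1 xy.2 I (ltac:(lia)).
  have [I2 S2 z2 C2] := IH (step s xy.1 xy.2).1 (f (wrap (step s xy.1 xy.2).2)) I1 (ltac:(lia)).
  split => //; first by move=> p /S1 /S2.
    lia.
  move=> T cT; have := C2 T cT.
  have -> : gorc T q = wrap (step s xy.1 xy.2).2.
    by rewrite /gorc E (cT _ _ _ _ _ (S2 _ x1) (S2 _ y1) (S2 _ l1)).
  by case: (adv k _ _).2 => [o|] //=.
- have [I2 S2 z2 C2] := IH s (f (fixa q)) I (ltac:(lia)).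
  split => //; first lia.
  move=> T cT; have := C2 T cT.
  have -> : gorc T q = fixa q by rewrite /gorc E.
  by case: (adv k _ _).2 => [o|] //=.
Qed.
End Adv.
From mathcomp Require Import all_boot all_order all_algebra.
From mathcomp Require Import zify.
Set Implicit Arguments. Unset Strict Implicit. Unset Printing Implicit Defensive.
Import GRing.Theory intZmod.

Lemma nat_of_bool_inj : injective nat_of_bool.
Proof. by case; case. Qed.

Lemma basis_card n (T : table n) s : is_basis T s -> (2 ^ size s <= n.+1)%N.
Proof.
case=> Hord Huniq.
pose F (b : (size s).-tuple bool) := prodpw T s (map nat_of_bool b).
have all2b : forall (bs : seq bool) s', size bs = size s' ->
    all (fun a => 1 < gord T a)%N s' ->
    all2 (fun e a => e < gord T a)%N (map nat_of_bool bs) s'.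
  elim=> [|b bs IH] [|a s'] //= [e] /andP[h1 h2]; rewrite IH // andbT.
  by case: b; lia.
have valid : forall b : (size s).-tuple bool,
    [/\ size (map nat_of_bool b) = size s,
        all2 (fun e a => e < gord T a)%N (map nat_of_bool b) s
      & prodpw T s (map nat_of_bool b) = F b].
  by move=> b; split => //; rewrite ?size_map ?size_tuple //; apply: all2b; rewrite ?size_tuple.
have Finj : injective F.
  move=> b1 b2 E; have [es [_ U]] := Huniq (F b1).
  have e1 := U _ (valid b1).
  have e2 : es = map nat_of_bool b2 by apply: U; have [? ? ?] := valid b2; split => //; rewrite -E.
  apply: val_inj; apply: (inj_map nat_of_bool_inj); by rewrite /= -e1 -e2.
have := leq_card F Finj; by rewrite card_tuple card_bool card_ord.
Qed.

Lemma rsize_ge (rels : seq relation) :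
  (size (flatten [seq [seq p.1 | p <- r.1 ++ r.2] | r <- rels]) <= rsize rels)%N.
Proof.
rewrite /rsize; elim: rels => [|r rels IH] /=; first by rewrite big_nil.
rewrite big_cons size_cat leq_add //.
rewrite size_map -sum1_size; apply: leq_sum => p _; lia.
Qed.

Lemma presents_size n (T : table n) gens rels :
  T (gid T) (gid T) = gid T -> presents T gens rels -> (size gens <= rsize rels)%N.
Proof.
move=> gg [_ [_ hrel]].
set allidx := flatten [seq [seq p.1 | p <- r.1 ++ r.2] | r <- rels].
suff key : forall i, (i < size gens)%N -> i \in allidx.
  apply: leq_trans (rsize_ge rels).
  rewrite -(size_iota 0 (size gens)); apply: uniq_leq_size; first exact: iota_uniq.
  by move=> i; rewrite mem_iota add0n; apply: key.
move=> i ilt.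
set t := size gens.
pose g := nth ord0 gens i.
pose v : seq int := [seq (if k == i then Posz (gord T g) else 0)%R | k <- iota 0 t].
have sv : size v = t by rewrite size_map size_iota.
have zv : zprod T gens v = gid T.
  have eg : gens = [seq nth ord0 gens k | k <- iota 0 t] by rewrite /t -/(mkseq _ _) mkseq_nth.
  rewrite /zprod {1}eg /v zip_map.
  elim: (iota 0 t) => [|k l IH] //=; rewrite IH.
  case: eqP => [->|_]; rewrite /zpow.
    by rewrite modzz /= gg.
  by rewrite mod0z /= gg.
have [cs [_ ev]] := (hrel v sv).1 zv.
have vi : nth 0%R v i = Posz (gord T g).
  by rewrite /v (nth_map 0%N) ?size_iota // nth_iota // add0n eqxx.
rewrite ev /lincomb (nth_map 0%N) ?size_iota // nth_iota // add0n in vi.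
set vs := map (relvec t) rels in vi.
have [k Hk] : exists k : 'I_(size vs), nth 0%R (nth [::] vs k) i != 0%R.
  case: (pickP (fun k : 'I_(size vs) => nth 0%R (nth [::] vs k) i != 0%R)) => [k Hk|H0].
    by exists k.
  exfalso; move: vi; rewrite big1 => [|k _]; last first.
    by have := H0 k; move/negbFE/eqP => ->; rewrite mulr0.
  by rewrite /gord.
have kr : (k < size rels)%N by rewrite -(size_map (relvec t)) ltn_ord.
pose r0 : relation := ([::], [::]).
pose r := nth r0 rels k.
have rin : r \in rels by exact: mem_nth.
move: Hk; rewrite /vs (nth_map r0) // -/r /relvec.
have sw : forall w, size (wvec t w) = t by move=> w; rewrite size_map size_iota.
rewrite (nth_map (0%R, 0%R)); last by rewrite size_zip !sw minnn.
rewrite nth_zip ?sw // /=.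
have wi : forall w, nth 0%R (wvec t w) i = (\sum_(p <- w | p.1 == i) p.2)%R.
  by move=> w; rewrite (nth_map 0%N) ?size_iota // nth_iota.
rewrite !wi => nz.
have [w [win hw]] : exists w, w \in [:: r.1; r.2] /\ has (fun p => p.1 == i) w.
  case h1: (has (fun p => p.1 == i) r.1); first by exists r.1; rewrite in_cons eqxx.
  case h2: (has (fun p => p.1 == i) r.2); first by exists r.2; rewrite !in_cons eqxx orbT.
  by move: nz; rewrite !big_hasC ?h1 ?h2 // subrr eqxx.
have [p pw /eqP pi] := hasP hw.
apply/flattenP; exists [seq p.1 | p <- r.1 ++ r.2]; first by apply: map_f.
rewrite -pi; apply: map_f; rewrite mem_cat.
by move: win; rewrite !in_cons orbF => /orP[/eqP<-|/eqP<-]; rewrite pw ?orbT.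
Qed.
From mathcomp Require Import all_boot all_order all_algebra.
From mathcomp Require Import zify.
Set Implicit Arguments. Unset Strict Implicit. Unset Printing Implicit Defensive.
Import GRing.Theory.

Section Conc.
Local Open Scope ring_scope.

Lemma pair_add (U V : zmodType) (a c : U) (b d : V) : (a, b) + (c, d) = (a + c, b + d).
Proof. by []. Qed.
Lemma pair_muln (U V : zmodType) (a : U) (b : V) k : (a, b) *+ k = (a *+ k, b *+ k).
Proof. by elim: k => [|k IH]; rewrite ?mulr0n // !mulrS IH. Qed.
Lemma Zp_exp M (x : 'Z_M) : (1 < M)%N -> x *+ M = 0.
Proof. by move=> M1; rewrite -mulr_natr pchar_Zp // mulr0. Qed.
Lemma b0_nz j : (1 : 'Z_4) *+ (2 * (8 * j + 1)) != 0.
Proof.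
apply/eqP => h; have := congr1 val h; rewrite Zp_mulrn /=.
rewrite (_ : (Zp_trunc 4).+2 = 4) //; lia.
Qed.

Lemma GA_exp M (a : ('Z_M * ('Z_2 * 'Z_2))%type) : (1 < M)%N -> a *+ (2 * M) = 0.
Proof.
move=> M1; case: a => a1 [a2 a3]; rewrite !pair_muln.
rewrite mulnC !mulrnA Zp_exp // mul0rn.
rewrite -!mulrnA mulnC !mulrnA !Zp_exp // !mul0rn. by [].
Qed.

Definition nj j := (32 * j + 3)%N.
Definition Mj j := (8 * j + 1)%N.
Definition Lj j := 'I_(nj j).+1.

Lemma cardL j : #|{: Lj j}| = (4 * Mj j)%N.
Proof. rewrite card_ord /nj /Mj; lia. Qed.

Lemma cardG j (K : finZmodType) : #|{: K}| = 4%N -> (0 < j)%N ->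
  #|{: ('Z_(Mj j) * K)%type}| = (4 * Mj j)%N.
Proof. move=> cK j0; rewrite card_prod card_ord Zp_cast ?cK /Mj; lia. Qed.

Lemma build j (K : finZmodType) (sf : seq (Lj j * 'Z_(Mj j))) :
  #|{: K}| = 4%N -> (0 < j)%N -> Inv sf ->
  exists (pi : Lj j -> ('Z_(Mj j) * K)%type) pii,
    [/\ cancel pi pii, cancel pii pi, (forall l h, (l, h) \in sf -> pi l = (h, 0))
      & consistent (tr pi pii) sf].
Proof.
move=> cK j0 /andP[u1 u2].
have [g [bg Hg]] := @complete (Lj j) ('Z_(Mj j) * K)%type 0
  [seq (p.1, (p.2, 0 : K)) | p <- sf] ltac:(by rewrite -map_comp)
  ltac:(by rewrite -map_comp (map_comp (fun h => (h, 0 : K)) snd) map_inj_uniq // => a b [])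
  ltac:(by rewrite cardL cardG).
case: bg => gi gK giK.
have Hp : forall l h, (l, h) \in sf -> g l = (h, 0).
  by move=> l h lh; apply: Hg; apply/mapP; exists (l, h).
exists g, gi; split => // x y hx hy l xs ys ls.
by rewrite /tr (Hp _ _ xs) (Hp _ _ ys) pair_add addr0 -(Hp _ _ ls) gK.
Qed.

Lemma tr_iso n (G : zmodType) (p1 p2 : 'I_n.+1 -> G) (p1i p2i : G -> 'I_n.+1) :
  cancel p1 p1i -> cancel p1i p1 -> cancel p2 p2i -> cancel p2i p2 ->
  table_iso (tr p1 p1i) (tr p2 p2i).
Proof.
move=> c1 c1' c2 c2'; exists (fun x => p2i (p1 x)); split.
  exists (fun x => p1i (p2 x)) => x; by rewrite ?c2 ?c1 ?c2' ?c1'.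
by move=> x y; rewrite /tr !c2' c1'.
Qed.

Lemma tr_noniso j (pA : Lj j -> ('Z_(Mj j) * ('Z_2 * 'Z_2))%type) pAi
    (pB : Lj j -> ('Z_(Mj j) * 'Z_4)%type) pBi : (0 < j)%N ->
  cancel pA pAi -> cancel pAi pA -> cancel pB pBi -> cancel pBi pB ->
  ~ table_iso (tr pA pAi) (tr pB pBi).
Proof.
move=> j0 cA cA' cB cB' [f [[fi fK fiK] Hf]].
pose g a := pB (f (pAi a)).
have gD : forall a b, g (a + b) = g a + g b.
  move=> a b; rewrite /g.
  have -> : pAi (a + b) = tr pA pAi (pAi a) (pAi b) by rewrite /tr !cA'.
  by rewrite Hf /tr cB'.
have g0 : g 0 = 0.
  have h := gD 0 0; rewrite addr0 in h.
  by apply: (addrI (g 0)); rewrite -h addr0.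
have gM : forall a k, g (a *+ k) = g a *+ k.
  by move=> a; elim=> [|k IH]; rewrite ?mulr0n ?g0 // !mulrS gD IH.
pose b0 : ('Z_(Mj j) * 'Z_4)%type := (0, 1).
pose a := pA (fi (pBi b0)).
have ga : g a = b0 by rewrite /g /a cA fiK cB'.
have := gM a (2 * Mj j)%N; rewrite GA_exp ?g0 ?ga; last by rewrite /Mj; lia.
rewrite /b0 pair_muln => /esym/eqP.
by rewrite xpair_eqE (negbTE (b0_nz j)) andbF.
Qed.
End Conc.

Definition ensl L (H : finZmodType) (s : st L H) (xs : seq L) := foldl (@ens L H) s xs.

Lemma ensl_spec L (H : finZmodType) (s : st L H) xs : Inv s -> (size s + size xs <= #|H|)%N ->
  [/\ Inv (ensl s xs), {subset s <= ensl s xs}, (size (ensl s xs) <= size s + size xs)%N &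
      {subset xs <= map fst (ensl s xs)}].
Proof.
elim: xs s => [|x xs IH] s I lt /=.
  by split => //; rewrite addn0.
have lt1 : (size s + (size xs).+1 <= #|H|)%N by exact: lt.
have [I1 S1 z1 x1] := ens_spec x I (ltac:(lia)).
have [I2 S2 z2 x2] := IH (ens s x) I1 (ltac:(lia)).
clear lt.
split => //; first by move=> p /S1 /S2.
  lia.
move=> y; rewrite in_cons => /orP[/eqP->|/x2 //].
have [p ps px] := mapP x1; apply/mapP; exists p => //; exact: S2.
Qed.
From mathcomp Require Import all_boot all_order all_algebra.
From mathcomp Require Import zify.
Set Implicit Arguments. Unset Strict Implicit. Unset Printing Implicit Defensive.
Import GRing.Theory.

Lemma cons_sub (L : finType) (H : finZmodType) (T : L -> L -> L) (s s' : st L H) :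
  {subset s <= s'} -> consistent T s' -> consistent T s.
Proof. by move=> S C x y hx hy l xs ys ls; apply: (C x y hx hy l); apply: S. Qed.

Lemma advj j Q A O (decode : Q -> option (Lj j * Lj j)) (fixa : Q -> A) (wrap : Lj j -> A)
  (t : dtree Q A O) : (0 < j)%N ->
  let r := adv decode fixa wrap j ([::] : st (Lj j) 'Z_(Mj j)) t in
  [/\ Inv r.1, (size r.1 <= 3 * j)%N &
    forall T, consistent T r.1 ->
      match r.2 with
      | Some o => (run (gorc decode fixa wrap T) t).1 = o
      | None => (j <= (run (gorc decode fixa wrap T) t).2)%N
      end].
Proof.
move=> j0.
have HL : (#|{: 'Z_(Mj j)}| <= #|{: Lj j}|)%N.
  by rewrite cardL card_ord Zp_cast /Mj; lia.
have Hs : (size ([::] : st (Lj j) 'Z_(Mj j)) + 3 * j <= #|{: 'Z_(Mj j)}|)%N.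
  by rewrite card_ord Zp_cast /Mj /=; lia.
have [I1 _ z1 C] := adv_spec HL decode fixa wrap t (isT : Inv ([::] : st (Lj j) 'Z_(Mj j))) Hs.
by split.
Qed.

Lemma pow_big j : (0 < j)%N -> (32 * j + 4 < 2 ^ (5 * j + 1))%N.
Proof.
elim: j => // j IH _; case: j IH => [|j] IH; first by [].
have h := IH isT.
have -> : (5 * j.+2 + 1 = (5 * j.+1 + 1) + 5)%N by lia.
rewrite expnD (_ : (2 ^ 5 = 32)%N) //.
move: h; move: (2 ^ (5 * j.+1 + 1))%N => X; lia.
Qed.

Lemma small_t j t : (0 < j)%N -> (2 ^ t <= 32 * j + 4)%N -> (t <= 5 * j)%N.
Proof.
move=> j0 h; rewrite leqNgt; apply/negP => lt.
have := leq_trans (leq_pexp2l (isT : (0 < 2)%N) lt) h.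
have := pow_big j0; rewrite addn1; lia.
Qed.

Lemma K2 : #|{: ('Z_2 * 'Z_2)%type}| = 4%N.
Proof. by rewrite card_prod card_ord. Qed.
Lemma K4 : #|{: 'Z_4}| = 4%N.
Proof. by rewrite card_ord. Qed.

Lemma P2nd M : ((0 : ('Z_M * ('Z_2 * 'Z_2))%type).2 == 0)%R.
Proof. by []. Qed.
Lemma P2D M (a b : ('Z_M * ('Z_2 * 'Z_2))%type) : (a.2 == 0)%R -> (b.2 == 0)%R -> ((a + b)%R.2 == 0)%R.
Proof. by case: a => a1 a2; case: b => b1 b2 /= /eqP -> /eqP ->; rewrite addr0. Qed.

Lemma in_H j (sf : st (Lj j) 'Z_(Mj j)) (pi : Lj j -> ('Z_(Mj j) * ('Z_2 * 'Z_2))%type) (xs : seq (Lj j)) :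
  (forall l h, (l, h) \in sf -> pi l = (h, 0%R)) -> {subset xs <= map fst sf} ->
  all (fun a => ((pi a).2 == 0)%R) xs.
Proof.
move=> Hp S; apply/allP => a /S /lk_in /Hp -> /=; by [].
Qed.
From mathcomp Require Import all_boot all_order all_algebra.
From mathcomp Require Import zify.
Set Implicit Arguments. Unset Strict Implicit. Unset Printing Implicit Defensive.
Import GRing.Theory.
HB.saturate prod.

Lemma cardH j : 0 < j -> #|{: 'Z_(Mj j)}| = 8 * j + 1.
Proof. move=> j0; rewrite card_ord Zp_cast /Mj //; lia. Qed.

Lemma part1 :
  (forall alg : forall n m : nat, dtree (q2 n m) nat bool,
     (forall n m (G : table n) (H : table m), ab_table G -> ab_table H ->
        ((run (orc2 G H) (alg n m)).1 = true <-> table_iso G H)) ->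
     exists c : nat, 0 < c /\ forall N, exists n, N <= n /\
       exists m (G : table n) (H : table m),
         [/\ ab_table G, ab_table H & n.+1 <= c * (run (orc2 G H) (alg n m)).2]).
Proof.
move=> alg Halg; exists 36; split => // N0.
pose j := N0.+1; have j0 : 0 < j by [].
exists (nj j); split; first by rewrite /nj /j; lia.
have [p0 [p0i [c0 c0' _ _]]] := @build j ('Z_2 * 'Z_2)%type [::] K2 j0 isT.
pose G0 := tr p0 p0i.
pose decode := fun q : q2 (nj j) (nj j) => match q with inl _ => None | inr c => Some c end.
pose fixa := fun q : q2 (nj j) (nj j) => match q with inl c => val (G0 c.1 c.2) | inr _ => 0 end.
pose wrap := fun l : Lj j => val l.
have E : forall T q, gorc decode fixa wrap T q = orc2 G0 T q.
  by move=> T [[a b]|[a b]].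
have [I1 z1 C] := advj decode fixa wrap (alg (nj j) (nj j)) j0.
move: I1 z1 C; set r := adv _ _ _ _ _ _ => I1 z1 C.
have [pA [pAi [cA cA' HA consA]]] := @build j ('Z_2 * 'Z_2)%type _ K2 j0 I1.
have := C _ consA; rewrite (run_ext _ (E _)).
case E2: r.2 => [o|] h.
- exfalso.
  have [pB [pBi [cB cB' HB consB]]] := @build j 'Z_4 _ K4 j0 I1.
  have := C _ consB; rewrite E2 (run_ext _ (E _)) => hB.
  have abG0 : ab_table G0 by apply: tr_ab.
  have o_true : o = true.
    rewrite -h; apply/(Halg _ _ _ _ abG0 (tr_ab cA cA')); exact: tr_iso.
  have : table_iso G0 (tr pB pBi).
    by apply/(Halg _ _ _ _ abG0 (tr_ab cB cB')); rewrite hB.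
  exact: (tr_noniso j0 c0 c0' cB cB').
- exists (nj j), G0, (tr pA pAi); split.
  + exact: tr_ab.
  + exact: tr_ab.
  + move: h; move: (run _ _).2 => X h; rewrite /nj; lia.
Qed.

Lemma part2 :
  (forall alg : forall n : nat, dtree (q1 n) 'I_n.+1 (seq 'I_n.+1),
     (forall n (G : table n), ab_table G -> is_basis G (run (orc1 G) (alg n)).1) ->
     exists c : nat, 0 < c /\ forall N, exists n, N <= n /\
       exists G : table n, ab_table G /\ n.+1 <= c * (run (orc1 G) (alg n)).2).
Proof.
move=> alg Halg; exists 36; split => // N0.
pose j := N0.+1; have j0 : 0 < j by [].
exists (nj j); split; first by rewrite /nj /j; lia.
pose decode := fun q : q1 (nj j) => Some q.
pose fixa := fun q : q1 (nj j) => (ord0 : Lj j).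
pose wrap := fun l : Lj j => l.
have E : forall T q, gorc decode fixa wrap T q = orc1 T q.
  by move=> T [a b].
have [I1 z1 C] := advj decode fixa wrap (alg (nj j)) j0.
move: I1 z1 C; set r := adv _ _ _ _ _ _ => I1 z1 C.
have [pA [pAi [cA cA' HA consA]]] := @build j ('Z_2 * 'Z_2)%type _ K2 j0 I1.
have := C _ consA; rewrite (run_ext _ (E _)).
case E2: r.2 => [o|] h; last first.
  exists (tr pA pAi); split; first exact: tr_ab.
  move: h; move: (run _ _).2 => X h; rewrite /nj; lia.
exfalso.
have bA := Halg _ _ (tr_ab cA cA'); rewrite h in bA.
have so : size o <= 5 * j.
  apply: small_t => //; have := basis_card bA; rewrite /nj; lia.
have Hcap : size r.1 + size o <= #|{: 'Z_(Mj j)}| by rewrite cardH //; lia.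
have [I2 S2 z2 x2] := ensl_spec I1 Hcap.
have [p1 [p1i [c1 c1' H1 cons1]]] := @build j ('Z_2 * 'Z_2)%type _ K2 j0 I2.
have := C _ (cons_sub S2 cons1); rewrite E2 (run_ext _ (E _)) => h1.
have := Halg _ _ (tr_ab c1 c1'); rewrite h1 => -[_ bas].
have [es [[_ _ ex] _]] := bas (p1i (0, (1, 0)))%R.
have := @prodpw_P _ _ p1 p1i c1 c1' (fun g => g.2 == 0)%R (P2nd _) (fun a b => @P2D _ a b) o es (in_H H1 x2).
by rewrite ex c1'.
Qed.

Lemma part3 :
  (forall f : nat -> nat, subpoly f ->
   forall alg : forall n : nat, dtree (q1 n) 'I_n.+1 (seq 'I_n.+1 * seq relation),
     (forall n (G : table n), ab_table G ->
        let out := (run (orc1 G) (alg n)).1 in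
        presents G out.1 out.2 /\ rsize out.2 <= f n.+1) ->
     exists c : nat, 0 < c /\ forall N, exists n, N <= n /\
       exists G : table n, ab_table G /\ n.+1 <= c * (run (orc1 G) (alg n)).2).
Proof.
move=> f fsub alg Halg; exists 36; split => // N0.
have [N1 HN1] := fsub 2 isT.
pose j := (N0 + N1).+2; have j0 : 0 < j by [].
exists (nj j); split; first by rewrite /nj /j; lia.
pose decode := fun q : q1 (nj j) => Some q.
pose fixa := fun q : q1 (nj j) => (ord0 : Lj j).
pose wrap := fun l : Lj j => l.
have E : forall T q, gorc decode fixa wrap T q = orc1 T q.
  by move=> T [a b].
have [I1 z1 C] := advj decode fixa wrap (alg (nj j)) j0.
move: I1 z1 C; set r := adv _ _ _ _ _ _ => I1 z1 C.
have [pA [pAi [cA cA' HA consA]]] := @build j ('Z_2 * 'Z_2)%type _ K2 j0 I1.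
have := C _ consA; rewrite (run_ext _ (E _)).
case E2: r.2 => [o|] h; last first.
  exists (tr pA pAi); split; first exact: tr_ab.
  move: h; move: (run _ _).2 => X h; rewrite /nj; lia.
exfalso.
have := Halg _ _ (tr_ab cA cA'); rewrite /= h => -[pA0 rA0].
have so : size o.1 <= 5 * j.
  have s1 := presents_size (tr_gid_gid cA cA') pA0.
  have fb := HN1 (nj j).+1 (ltac:(rewrite /nj /j; lia)).
  move: fb rA0 s1; move: (f (nj j).+1) => F; rewrite /nj /j => fb rA0 s1.
  nia.
have Hcap : size r.1 + size o.1 <= #|{: 'Z_(Mj j)}| by rewrite cardH //; lia.
have [I2 S2 z2 x2] := ensl_spec I1 Hcap.
have [p1 [p1i [c1 c1' H1 cons1]]] := @build j ('Z_2 * 'Z_2)%type _ K2 j0 I2.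
have := C _ (cons_sub S2 cons1); rewrite E2 (run_ext _ (E _)) => h1.
have := Halg _ _ (tr_ab c1 c1'); rewrite /= h1 => -[[_ [gen _]] _].
have [v [_ ex]] := gen (p1i (0, (1, 0)))%R.
have := @zprod_P _ _ p1 p1i c1 c1' (fun g => g.2 == 0)%R (P2nd _) (fun a b => @P2D _ a b) o.1 v (in_H H1 x2).
by rewrite ex c1'.
Qed.

Theorem mainTheorem19 :
  (* (1) isomorphism testing *)
  (forall alg : forall n m : nat, dtree (q2 n m) nat bool,
     (forall n m (G : table n) (H : table m), ab_table G -> ab_table H ->
        ((run (orc2 G H) (alg n m)).1 = true <-> table_iso G H)) ->
     exists c : nat, 0 < c /\ forall N, exists n, N <= n /\
       exists m (G : table n) (H : table m),
         [/\ ab_table G, ab_table H & n.+1 <= c * (run (orc2 G H) (alg n m)).2]) /\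
  (* (2) finding a basis *)
  (forall alg : forall n : nat, dtree (q1 n) 'I_n.+1 (seq 'I_n.+1),
     (forall n (G : table n), ab_table G -> is_basis G (run (orc1 G) (alg n)).1) ->
     exists c : nat, 0 < c /\ forall N, exists n, N <= n /\
       exists G : table n, ab_table G /\ n.+1 <= c * (run (orc1 G) (alg n)).2) /\
  (* (3) generators with relations of size n^{o(1)} *)
  (forall f : nat -> nat, subpoly f ->
   forall alg : forall n : nat, dtree (q1 n) 'I_n.+1 (seq 'I_n.+1 * seq relation),
     (forall n (G : table n), ab_table G ->
        let out := (run (orc1 G) (alg n)).1 in
        presents G out.1 out.2 /\ rsize out.2 <= f n.+1) ->
     exists c : nat, 0 < c /\ forall N, exists n, N <= n /\
       exists G : table n, ab_table G /\ n.+1 <= c * (run (orc1 G) (alg n)).2).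
Proof. split; [exact: part1 | split; [exact: part2 | exact: part3]]. Qed.
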